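(* Let $F$ be a partially colored forest. Alice can win the $3$-Reduced Coloring Game on $\mathcal{R}'(F)$ if every trunk $R'$ of $\mathcal{R}'(F)$ satisfies one of: (i) $R'$ has exactly one colored vertex and contains no edge of $E_{>>2}(\mathcal{R}'(F))$; or (ii) $R'$ has no colored vertices and there exists a vertex $v\in V(R')$ that covers $E_{>>2}(R')$.
   Context: A partial coloring assigns to some vertices colors from a set of $3$ colors so that adjacent colored vertices differ; a color is legal for an uncolored vertex $v$ if no neighbor of $v$ has it. The $k$-Reduced Coloring Game ($k$-RCG) on a partially colored graph: Bob and Alice alternate turns, Bob first, each coloring an uncolored vertex with a legal color from a $k$-set of colors; Bob may pass; Alice may only color vertices of degree at least $k$; Bob wins if at some point an uncolored vertex has no legal color; Alice wins once every vertex of degree at least $k$ is colored. For a partially colored forest $F$, a trunk of $F$ is a maximal connected subgraph $R$ such that every colored vertex of $R$ is a leaf of $R$; $\mathcal{R}(F)$ is the partially colored forest formed by the disjoint union of all trunks of $F$ (a colored vertex lying in several trunks appears as a separate colored copy in each). For a graph $G$, $E_{>2}(G)$ is the set of edges $xy$ with $d_G(x)>2$ or $d_G(y)>2$, and $E_{>>2}(G)$ the set of edges $xy$ with $d_G(x)>2$ and $d_G(y)>2$. The reduced graph is $\mathcal{R}'(F)=\mathcal{R}(F)-\{xy: xy\notin E_{>2}(\mathcal{R}(F))\}$; its trunks are defined as for any partially colored forest. A vertex $v$ covers a set of edges if $v$ is an endpoint of every edge in the set. *)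

(* Defs.v *)
From mathcomp Require Import all_boot.
Set Implicit Arguments. Unset Strict Implicit. Unset Printing Implicit Defensive.

(* Graphs: a finite vertex type V with a symmetric irreflexive adjacency
   relation e.  A partial coloring with colors 'I_k is c : V -> option 'I_k
   (None = uncolored). *)

Section Graphs.
Variables (V : finType) (k : nat) (e : rel V) (c : V -> option 'I_k).

Definition deg (x : V) : nat := #|[set y | e x y]|.

Definition simple_graph : Prop := symmetric e /\ irreflexive e.

Definition forest : Prop :=
  forall p : seq V, uniq p -> 2 < size p -> ~~ cycle e p.

Definition proper_partial_coloring : Prop :=
  forall x y, e x y -> c x != None -> c x != c y.

(* A subgraph is given by a vertex set and a (symmetric) set of ordered edges *)
Definition subgraph := ({set V} * {set V * V})%type.

Definition is_subgraph (S : subgraph) : bool :=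
  [forall p in S.2, [&& e p.1 p.2, p.1 \in S.1, p.2 \in S.1 & (p.2, p.1) \in S.2]].

Definition degS (S : subgraph) (x : V) : nat := #|[set y | (x, y) \in S.2]|.

Definition connectedS (S : subgraph) : bool :=
  [forall x in S.1, forall y in S.1, connect (fun a b => (a, b) \in S.2) x y].

Definition trunk_prop (S : subgraph) : bool :=
  [&& is_subgraph S, S.1 != set0, connectedS S &
      [forall v in S.1, (c v != None) ==> (degS S v == 1)]].

Definition is_trunk (S : subgraph) : bool :=
  trunk_prop S &&
  [forall S' : subgraph,
     [&& trunk_prop S', S.1 \subset S'.1 & S.2 \subset S'.2] ==> (S' == S)].

Definition in_Ebb2S (S : subgraph) (x y : V) : bool :=
  (2 < degS S x) && (2 < degS S y).

Definition legal (d : V -> option 'I_k) (v : V) (col : 'I_k) : bool :=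
  [forall y, e v y ==> (d y != Some col)].

Definition upd (d : V -> option 'I_k) (v : V) (col : 'I_k) : V -> option 'I_k :=
  fun w => if w == v then Some col else d w.

Definition bob_won (d : V -> option 'I_k) : Prop :=
  exists v, d v = None /\ forall col, ~~ legal d v col.

Definition alice_done (d : V -> option 'I_k) : Prop :=
  forall v, k <= deg v -> d v <> None.

(* alice_wins_B d : Alice has a winning strategy from position d, Bob to move.
   alice_wins_A d : Alice has a winning strategy from position d, Alice to move.
   (Least fixed point: Alice must force a win in finitely many moves.) *)
Inductive alice_wins_B : (V -> option 'I_k) -> Prop :=
| wB_done d : ~ bob_won d -> alice_done d -> alice_wins_B d
| wB_move d : ~ bob_won d ->
    alice_wins_A d (* Bob passes *) ->
    (forall v col, d v = None -> legal d v col -> alice_wins_A (upd d v col)) ->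
    alice_wins_B d
with alice_wins_A : (V -> option 'I_k) -> Prop :=
| wA_done d : ~ bob_won d -> alice_done d -> alice_wins_A d
| wA_move d v col : ~ bob_won d -> d v = None -> k <= deg v -> legal d v col ->
    alice_wins_B (upd d v col) -> alice_wins_A d.

(* Alice wins the k-RCG on (V, e, c): Bob moves first *)
Definition alice_wins_RCG : Prop := alice_wins_B c.

End Graphs.

Section Reduction.
Variables (V : finType) (e : rel V) (c : V -> option 'I_3).

(* vertices of R(F): pairs (trunk R, vertex v of R) -- disjoint union of trunks *)
Definition RV : finType :=
  {p : subgraph V * V | is_trunk e c p.1 && (p.2 \in p.1.1)}.

Definition Redge : rel RV :=
  fun a b => ((val a).1 == (val b).1) && (((val a).2, (val b).2) \in (val a).1.2).

Definition Rcol (a : RV) : option 'I_3 := c (val a).2.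

(* R'(F) = R(F) minus the edges not in E_{>2}(R(F)) *)
Definition Redge' : rel RV :=
  fun a b => Redge a b && ((2 < deg Redge a) || (2 < deg Redge b)).

End Reduction.

Arguments Redge {V} e c _ _.
Arguments Redge' {V} e c _ _.
Arguments Rcol {V} e c _.

(* Main.v *)
Require Import Defs.
From mathcomp Require Import all_boot zify.
Set Implicit Arguments. Unset Strict Implicit. Unset Printing Implicit Defensive.

Section Game.
Variables (W : finType) (E : rel W).
Hypothesis Esym : symmetric E.
Variables (C : {set W}) (f : W -> option W).
Definition high w := 3 <= deg E w.
Hypothesis S0 : forall v, v \in C -> high v.
Hypothesis S1 : forall v y, v \in C -> E v y -> f y = Some v.
Hypothesis S2 : forall v, v \in C -> f v = None.
Hypothesis S3 : forall a b, E a b -> high a -> high b -> (a \in C) || (b \in C).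
Hypothesis S5 : forall a b, a \in C -> b \in C -> ~~ E a b.
Hypothesis S6 : forall y w, f y = Some w -> high w.

Definition colset (d : W -> option 'I_3) w : {set 'I_3} :=
  [set cl | [exists y, E w y && (d y == Some cl)]].
Definition unas (d : W -> option 'I_3) w := [set y | E w y && (d y == None) && (f y != Some w)].
Definition bad d w := #|colset d w| + #|unas d w|.

Lemma legal_of d w : #|colset d w| <= 2 -> exists cl, legal E d w cl.
Proof.
move=> H.
have : ~: colset d w != set0.
  rewrite -card_gt0; have := cardsC (colset d w); rewrite card_ord; lia.
case/set0Pn=> cl; rewrite inE => Hcl; exists cl.
apply/forallP=> y; apply/implyP=> Ewy; apply/negP=> /eqP dy.
move/negP: Hcl; apply; rewrite inE; apply/existsP; exists y; by rewrite Ewy dy eqxx.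
Qed.

Lemma colset_deg d w : #|colset d w| <= deg E w.
Proof.
rewrite /deg.
apply: (leq_trans _ (leq_imset_card (fun y => odflt ord0 (d y)) [set y | E w y])).
apply: subset_leq_card; apply/subsetP=> cl; rewrite inE => /existsP[y /andP[Ewy /eqP dy]].
apply/imsetP; exists y; first by rewrite inE.
by rewrite dy.
Qed.

Lemma notbob d : (forall w, d w = None -> #|colset d w| <= 2) -> ~ bob_won E d.
Proof.
move=> H [w [dw Hl]]; have [cl Hc] := legal_of (H w dw).
by move: (Hl cl); rewrite Hc.
Qed.

Lemma bad_mono d1 d2 w :
  (forall y, d1 y != None -> d2 y = d1 y) ->
  (forall y, E w y -> d1 y = None -> d2 y != None -> f y != Some w) ->
  bad d2 w <= bad d1 w.
Proof.
move=> H1 H2.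
set N := [set y | E w y && (d1 y == None) && (d2 y != None)].
have NU : N \subset unas d1 w.
  apply/subsetP=> y; rewrite !inE => /andP[/andP[Ewy /eqP d1y] d2y].
  by rewrite Ewy d1y eqxx /= H2.
have U2 : unas d2 w \subset unas d1 w :\: N.
  apply/subsetP=> y; rewrite !inE => /andP[/andP[Ewy /eqP d2y] fy].
  have d1y : d1 y = None.
    case E1: (d1 y) => [a|] //; have := H1 y; by rewrite E1 d2y => /(_ isT).
  by rewrite Ewy d1y d2y eqxx fy.
have C2 : colset d2 w \subset colset d1 w :|: [set odflt ord0 (d2 y) | y in N].
  apply/subsetP=> cl; rewrite !inE => /existsP[y /andP[Ewy /eqP d2y]].
  case E1: (d1 y) => [a|].
    have := H1 y; rewrite E1 => /(_ isT); rewrite d2y => -[->].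
    apply/orP; left; apply/existsP; exists y; by rewrite Ewy E1 eqxx.
  apply/orP; right; apply/imsetP; exists y; last by rewrite d2y.
  by rewrite inE Ewy E1 d2y.
have h1 := subset_leq_card C2; have h2 := subset_leq_card U2.
rewrite cardsU in h1; rewrite cardsD (setIidPr NU) in h2.
have h3 := leq_imset_card (fun y => odflt ord0 (d2 y)) N.
have h4 := subset_leq_card NU.
have h1' : #|colset d2 w| <= #|colset d1 w| + #|N|.
  apply: (leq_trans h1); apply: (leq_trans (leq_subr _ _)); by rewrite leq_add2l.
apply: leq_trans (leq_add h1' h2) _; by rewrite -addnA subnKC.
Qed.

Lemma bad_le d w : bad d w <= #|[set y | E w y && ((d y != None) || (f y != Some w))]|.
Proof.
set A := [set y | E w y && (d y != None)].
have h1 : #|colset d w| <= #|A|.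
  apply: (leq_trans _ (leq_imset_card (fun y => odflt ord0 (d y)) A)).
  apply: subset_leq_card; apply/subsetP=> cl; rewrite inE => /existsP[y /andP[Ewy /eqP dy]].
  apply/imsetP; exists y; first by rewrite inE Ewy dy.
  by rewrite dy.
have h2 : A :&: unas d w = set0.
  apply/setP=> y; rewrite !inE; case: (d y) => [a|]; by rewrite /= ?andbF ?andbT.
have h3 : A :|: unas d w \subset [set y | E w y && ((d y != None) || (f y != Some w))].
  apply/subsetP=> y; rewrite !inE; case: (d y) => [a|] /=; rewrite ?andbT ?andbF ?orbF //=.
have := cardsUI A (unas d w); rewrite h2 cards0 addn0.
have := subset_leq_card h3; rewrite /bad; lia.
Qed.

Definition Inv d := (forall v, v \in C -> d v = None -> forall y, E v y -> d y = None) /\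
  (forall w, high w -> w \notin C -> d w = None -> bad d w <= 1).

Lemma inv_col1 d w : Inv d -> high w -> d w = None -> #|colset d w| <= 1.
Proof.
move=> [H1 H2] hw dw; case wC: (w \in C).
  suff -> : colset d w = set0 by rewrite cards0.
  apply/setP=> cl; rewrite !inE; apply/existsP=> -[y /andP[Ewy /eqP dy]].
  by rewrite (H1 w wC dw y Ewy) in dy.
have := H2 w hw (negbT wC) dw; rewrite /bad; lia.
Qed.

Lemma updE (d : W -> option 'I_3) v c w : upd d v c w = if w == v then Some c else d w.
Proof. by []. Qed.

Lemma inv_notbob d : Inv d -> ~ bob_won E d.
Proof.
move=> Hi; apply: notbob => w dw.
case hw: (high w); first by have := inv_col1 Hi hw dw; lia.
have := colset_deg d w; move: hw; rewrite /high; lia.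
Qed.

Lemma colset_upd d x cl w : #|colset (upd d x cl) w| <= (#|colset d w|).+1.
Proof.
have : colset (upd d x cl) w \subset cl |: colset d w.
  apply/subsetP=> c'; rewrite !inE => /existsP[y /andP[Ewy]]; rewrite updE.
  case: (y =P x) => [_ /eqP [->]|_ dy]; first by rewrite eqxx.
  apply/orP; right; apply/existsP; exists y; by rewrite Ewy dy.
move/subset_leq_card; rewrite cardsU1; case: (cl \in colset d w) => /=; lia.
Qed.

Lemma after_bob d x cl : Inv d -> ~ bob_won E (upd d x cl).
Proof.
move=> Hi; apply: notbob => w; rewrite updE; case: eqP => // _ dw.
case hw: (high w).
  have := inv_col1 Hi hw dw; have := colset_upd d x cl w; lia.
have := colset_deg (upd d x cl) w; move: hw; rewrite /high; lia.
Qed.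

Definition ucnt (d : W -> option 'I_3) := #|[set u | d u == None]|.

Lemma ucnt_upd d x cl : d x = None -> ucnt (upd d x cl) < ucnt d.
Proof.
move=> dx; apply: proper_card; apply/properP; split.
  apply/subsetP=> u; rewrite !inE updE; by case: (u =P x).
by exists x; rewrite !inE ?updE ?eqxx ?dx.
Qed.

Lemma free_move d : Inv d ->
  (forall d', ucnt d' < ucnt d -> Inv d' -> alice_wins_B E d') -> alice_wins_A E d.
Proof.
move=> Hi IH; have nb := inv_notbob Hi; have [H1 H2] := Hi.
case: (pickP [pred v | (v \in C) && (d v == None)]) => [v /andP[vC /eqP dv] | noC].
  have leg : legal E d v ord0.
    apply/forallP=> y; apply/implyP=> Evy; by rewrite (H1 v vC dv y Evy).
  apply: (wA_move nb dv (S0 vC) leg); apply: IH; first exact: ucnt_upd.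
  split.
    move=> u uC; rewrite updE; case: (u =P v) => // uv du y Euy; rewrite updE.
    case: (y =P v) => [yv|_]; last exact: H1 uC du y Euy.
    by move: (S5 uC vC); rewrite -yv Euy.
  move=> w hw wC; rewrite updE; case: (w =P v) => // wv dw.
  apply: leq_trans (H2 w hw wC dw); apply: bad_mono.
    move=> y; rewrite updE; case: (y =P v) => // ->; by rewrite dv.
  move=> y _ dy; rewrite updE; case: (y =P v) => [-> _|_]; [by rewrite S2 | by rewrite dy].
case: (pickP [pred w | high w && (d w == None)]) => [w /andP[hw /eqP dw] | noW].
  have wC : w \notin C by apply/negP=> wC; move: (noC w); rewrite /= wC dw.
  have [cl leg] : exists cl, legal E d w cl.
    apply: legal_of; have := inv_col1 Hi hw dw; lia.
  apply: (wA_move nb dw hw leg); apply: IH; first exact: ucnt_upd.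
  split.
    move=> u uC; rewrite updE; case: (u =P w) => // uw du.
    by move: (noC u); rewrite /= uC du.
  move=> u hu uC; rewrite updE; case: (u =P w) => // uw du.
  apply: leq_trans (H2 u hu uC du); apply: bad_mono.
    move=> y; rewrite updE; case: (y =P w) => // ->; by rewrite dw.
  move=> y Euy dy; rewrite updE; case: (y =P w) => [yw _|_]; last by rewrite dy.
  subst y.
  by move: (S3 Euy hu hw); rewrite (negbTE uC) (negbTE wC).
apply: wA_done => // v hv dv.
by move: (noW v); rewrite /= /high hv dv eqxx.
Qed.

Lemma inv_free d x cl : Inv d -> d x = None ->
  (forall w, f x = Some w -> upd d x cl w != None) -> Inv (upd d x cl).
Proof.
move=> [H1 H2] dx Hf; split.
  move=> v vC; rewrite updE; case: (v =P x) => // vx dv y Evy; rewrite updE.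
  case: (y =P x) => [yx|_]; last exact: H1 vC dv y Evy.
  subst y; have := Hf v (S1 vC Evy); by rewrite updE; case: (v =P x) => // _; rewrite dv.
move=> u hu uC; rewrite updE; case: (u =P x) => // ux du.
apply: leq_trans (H2 u hu uC du); apply: bad_mono.
  move=> y; rewrite updE; case: (y =P x) => // ->; by rewrite dx.
move=> y _ dy; rewrite updE; case: (y =P x) => [yx _|_]; last by rewrite dy.
subst y; apply/negP=> /eqP fx; have := Hf u fx; rewrite updE.
by case: (u =P x) => // _; rewrite du.
Qed.

Lemma bob_move d x cl : Inv d -> d x = None ->
  (forall d', ucnt d' < ucnt d -> Inv d' -> alice_wins_B E d') ->
  alice_wins_A E (upd d x cl).
Proof.
move=> Hi dx IH; have [H1 H2] := Hi.
have nb : ~ bob_won E (upd d x cl) by apply: after_bob.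
have lt1 : ucnt (upd d x cl) < ucnt d by apply: ucnt_upd.
have IH' : forall d', ucnt d' < ucnt (upd d x cl) -> Inv d' -> alice_wins_B E d'.
  move=> d' lt; apply: IH; exact: ltn_trans lt lt1.
have freeC : (forall w, f x = Some w -> upd d x cl w != None) -> alice_wins_A E (upd d x cl).
  move=> Hf; apply: free_move => //; exact: inv_free.
case Hfx: (f x) => [w|]; last by apply: freeC => w; rewrite Hfx.
case dw': (upd d x cl w) => [cw|]; first by apply: freeC => w'; rewrite Hfx => -[<-]; rewrite dw'.
have wx : w != x by apply/eqP=> wx; move: dw'; rewrite updE wx eqxx.
have dw : d w = None by move: dw'; rewrite updE (negbTE wx).
have hw := S6 Hfx.
case wC: (w \in C).
  have [cl' leg] : exists cl', legal E (upd d x cl) w cl'.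
    apply: legal_of; have := colset_upd d x cl w; have := inv_col1 Hi hw dw; lia.
  apply: (wA_move nb dw' hw leg); apply: IH'; first exact: ucnt_upd.
  split.
    move=> u uC; rewrite !updE; case: (u =P w) => // uw; case: (u =P x) => // ux du y Euy.
    rewrite !updE; case: (y =P w) => [yw|_].
      by move: (S5 uC wC); rewrite -yw Euy.
    case: (y =P x) => [yx|_]; last exact: H1 uC du y Euy.
    subst y; move: (S1 uC Euy); rewrite Hfx => -[wu]; by case: uw.
  move=> u hu uC; rewrite !updE; case: (u =P w) => // uw; case: (u =P x) => // ux du.
  apply: leq_trans (H2 u hu uC du); apply: bad_mono.
    move=> y; rewrite !updE; case: (y =P w) => [->|_]; first by rewrite dw.
    case: (y =P x) => // ->; by rewrite dx.
  move=> y _ dy; rewrite !updE; case: (y =P w) => [->|_]; first by rewrite S2.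
  case: (y =P x) => [->|_]; last by rewrite dy.
  move=> _; rewrite Hfx; apply/negP => /eqP[wu]; by case: uw.
case: (pickP [pred v | (v \in C) && (upd d x cl v == None) && E w v]) =>
   [v /andP[/andP[vC /eqP dv'] Ewv] | noV].
  have vx : v != x by apply/eqP=> vx; move: dv'; rewrite updE vx eqxx.
  have dv : d v = None by move: dv'; rewrite updE (negbTE vx).
  have leg : legal E (upd d x cl) v cl.
    apply/forallP=> y; apply/implyP=> Evy; rewrite updE.
    case: (y =P x) => [yx|_]; last by rewrite (H1 v vC dv y Evy).
    subst y; move: (S1 vC Evy); rewrite Hfx => -[wv]; by rewrite wv vC in wC.
  apply: (wA_move nb dv' (S0 vC) leg); apply: IH'; first exact: ucnt_upd.
  split.
    move=> u uC; rewrite !updE; case: (u =P v) => // uv; case: (u =P x) => // ux du y Euy.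
    rewrite !updE; case: (y =P v) => [yv|_].
      by move: (S5 uC vC); rewrite -yv Euy.
    case: (y =P x) => [yx|_]; last exact: H1 uC du y Euy.
    subst y; move: (S1 uC Euy); rewrite Hfx => -[wu]; by rewrite wu uC in wC.
  move=> u hu uC; rewrite !updE; case: (u =P v) => // uv; case: (u =P x) => // ux du.
  case: (u =P w) => [uw|uw]; last first.
    apply: leq_trans (H2 u hu uC du); apply: bad_mono.
      move=> y; rewrite !updE; case: (y =P v) => [->|_]; first by rewrite dv.
      case: (y =P x) => // ->; by rewrite dx.
    move=> y _ dy; rewrite !updE; case: (y =P v) => [->|_]; first by rewrite S2.
    case: (y =P x) => [->|_]; last by rewrite dy.
    move=> _; rewrite Hfx; apply/negP => /eqP[wu]; by case: uw.
  subst u.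
  have bw := H2 w hw (negbT wC) dw.
  have vU : v \in unas d w by rewrite inE Ewv dv S2.
  have U1 : #|unas d w| <= 1 by move: bw; rewrite /bad; lia.
  have C0 : colset d w = set0.
    apply/eqP; rewrite -cards_eq0.
    have : 0 < #|unas d w| by apply/card_gt0P; exists v.
    move: bw; rewrite /bad; lia.
  have Ueq := card_le1P U1 v vU.
  rewrite /bad.
  have -> : unas (upd (upd d x cl) v cl) w = set0.
    apply/setP=> y; rewrite !inE !updE.
    case: (y =P v) => [_|yv]; first by rewrite /= ?andbF.
    case: (y =P x) => [_|yx]; first by rewrite /= ?andbF.
    case Hy: (E w y && (d y == None) && (f y != Some w)) => //.
    have : y \in unas d w by rewrite inE.
    by rewrite Ueq inE => /eqP.
  rewrite cards0 addn0.
  have : colset (upd (upd d x cl) v cl) w \subset [set cl].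
    apply/subsetP=> c'; rewrite !inE => /existsP[y /andP[Ewy]]; rewrite !updE.
    case: (y =P v) => [_ /eqP[->]//|_]; case: (y =P x) => [_ /eqP[->]//|_] dy.
    have : c' \in colset d w by rewrite inE; apply/existsP; exists y; rewrite Ewy.
    by rewrite C0 inE.
  by move/subset_leq_card; rewrite cards1.
have [cl' leg] : exists cl', legal E (upd d x cl) w cl'.
  apply: legal_of; have := colset_upd d x cl w; have := inv_col1 Hi hw dw; lia.
apply: (wA_move nb dw' hw leg); apply: IH'; first exact: ucnt_upd.
split.
  move=> u uC; rewrite !updE; case: (u =P w) => // uw; case: (u =P x) => // ux du y Euy.
  rewrite !updE; case: (y =P w) => [yw|_].
    subst y; move: (noV u); rewrite /= uC updE.
    by case: (u =P x) => // _; rewrite du eqxx (Esym w u) Euy.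
  case: (y =P x) => [yx|_]; last exact: H1 uC du y Euy.
  subst y; move: (S1 uC Euy); rewrite Hfx => -[wu]; by case: uw.
move=> u hu uC; rewrite !updE; case: (u =P w) => // uw; case: (u =P x) => // ux du.
apply: leq_trans (H2 u hu uC du); apply: bad_mono.
  move=> y; rewrite !updE; case: (y =P w) => [->|_]; first by rewrite dw.
  case: (y =P x) => // ->; by rewrite dx.
move=> y Euy dy; rewrite !updE; case: (y =P w) => [yw|_].
  subst y; by move: (S3 Euy hu hw); rewrite (negbTE uC) wC.
case: (y =P x) => [->|_]; last by rewrite dy.
move=> _; rewrite Hfx; apply/negP => /eqP[wu]; by case: uw.
Qed.

Lemma game d : Inv d -> alice_wins_B E d.
Proof.
have : forall n d, ucnt d < n -> Inv d -> alice_wins_B E d.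
  elim=> [//|n IHn] d0 lt Hi.
  have IH : forall d', ucnt d' < ucnt d0 -> Inv d' -> alice_wins_B E d'.
    move=> d' lt'; apply: IHn; exact: leq_trans lt' lt.
  apply: wB_move; first exact: inv_notbob.
    exact: free_move.
  move=> v cl dv _; exact: bob_move.
move=> H; apply: H; exact: ltnSn.
Qed.
End Game.

Section Red.
Variables (V : finType) (e : rel V) (c : V -> option 'I_3).
Hypothesis esimp : simple_graph e.
Hypothesis efor : forest e.
Local Notation T := (RV e c).
Local Notation E := (Redge' e c).
Local Notation E0 := (Redge e c).
Local Notation col := (Rcol e c).

Lemma sub_prop (U : finType) (e' : rel U) (S : subgraph U) p : is_subgraph e' S -> p \in S.2 ->
  [&& e' p.1 p.2, p.1 \in S.1, p.2 \in S.1 & (p.2, p.1) \in S.2].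
Proof. by move/forallP/(_ p)/implyP. Qed.

Lemma trunkT (a : T) : trunk_prop e c (val a).1.
Proof. by case/andP: (valP a) => /andP[]. Qed.

Lemma trunk_sub (a : T) : is_subgraph e (val a).1.
Proof. by case/and4P: (trunkT a). Qed.

Lemma E0_e a b : E0 a b -> e (val a).2 (val b).2.
Proof. by case/andP=> _ /(sub_prop (trunk_sub a)) /and4P[]. Qed.

Lemma E0sym : symmetric E0.
Proof.
move=> a b; apply/idP/idP => /andP[/eqP h1 h2]; rewrite /Redge -h1 eqxx /=;
  by case/(sub_prop (trunk_sub _))/and4P: h2; rewrite ?h1.
Qed.

Lemma Esym : symmetric E.
Proof. by move=> a b; rewrite /Redge' E0sym orbC. Qed.

Lemma E_E0 a b : E a b -> E0 a b.
Proof. by case/andP. Qed.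

Lemma Eirr a : E a a = false.
Proof.
apply/negP=> /E_E0 /E0_e; case: esimp => _ irr; by rewrite irr.
Qed.

Lemma path_fst x s : path E0 x s -> all (fun y => (val y).1 == (val x).1) s.
Proof.
elim: s x => [//|y s IH] x /= /andP[/andP[/eqP h _] p].
by rewrite h eqxx /=; apply: IH.
Qed.

Lemma Eforest : forest E.
Proof.
move=> [//|x q] up sz; apply/negP=> cyc.
pose g (a : T) := (val a).2.
have pth : path E0 x (rcons q x).
  by apply: sub_path (cyc) => a b /E_E0.
have Hall : forall y, y \in x :: q -> (val y).1 = (val x).1.
  move=> y; rewrite inE => /orP[/eqP -> //|yq].
  have := path_fst pth => /allP /(_ y); rewrite mem_rcons inE yq orbT => /(_ isT) /eqP //.
have ginj : {in x :: q &, injective g}.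
  move=> a b ha hb gab; apply: val_inj.
  rewrite [val a]surjective_pairing [val b]surjective_pairing (Hall _ ha) (Hall _ hb).
  by rewrite /g in gab; rewrite gab.
have := efor (p := map g (x :: q)).
rewrite (map_inj_in_uniq ginj) up size_map sz => /(_ isT isT) /negP; apply.
rewrite /= -map_rcons path_map; apply: sub_path pth => a b /E0_e //.
Qed.

Lemma deg_col a : col a != None -> deg E a <= 1.
Proof.
move=> ca.
have t := trunkT a.
have := t; case/and4P=> _ _ _ /forallP /(_ (val a).2) /implyP.
case/andP: (valP a) => _ /[swap] /[apply] /implyP /(_ ca) /eqP deg1.
apply: (@leq_trans (deg E0 a)).
  apply: subset_leq_card; apply/subsetP=> b; rewrite !inE; by case/andP.
rewrite -deg1 /deg /degS.
pose g (b : T) := (val b).2.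
rewrite -(card_in_imset (f := g)); last first.
  move=> b1 b2; rewrite !inE => /andP[/eqP h1 _] /andP[/eqP h2 _] gb; apply: val_inj.
  rewrite [val b1]surjective_pairing [val b2]surjective_pairing -h1 -h2.
  by rewrite /g in gb; rewrite gb.
apply: subset_leq_card; apply/subsetP=> y /imsetP[b]; rewrite inE => /andP[/eqP h1 h2] ->.
by rewrite inE.
Qed.

Definition K (a : T) : subgraph T :=
  ([set b | connect E a b], [set pq | E pq.1 pq.2 && connect E a pq.1]).

Lemma csym : connect_sym E.
Proof. exact: sym_connect_sym Esym. Qed.

Lemma Ksame a b : connect E a b -> K a = K b.
Proof.
move=> ab; have h := same_connect csym ab.
rewrite /K; congr pair; apply/setP=> z; by rewrite !inE h.
Qed.

Lemma has_nb a v : connect E a v -> a != v -> exists u, E v u.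
Proof.
move=> /connectP[s pth ->]; case/lastP: s pth => [|s' t] pth; first by rewrite eqxx.
rewrite rcons_path in pth; case/andP: pth => _ h.
by exists (last a s'); rewrite Esym last_rcons.
Qed.

Definition good (a : T) := (col a == None) || (0 < deg E a).

Lemma degK a v : connect E a v -> degS (K a) v = deg E v.
Proof.
move=> av; rewrite /degS /deg; apply: eq_card => y; by rewrite !inE /= av andbT.
Qed.

Lemma lift_path a x s : connect E a x -> path E x s ->
  path (fun u w => (u, w) \in (K a).2) x s.
Proof.
elim: s x => [//|y s IH] x ax /= /andP[xy p].
rewrite inE /= xy ax /=; apply: IH p; apply: connect_trans ax (connect1 xy).
Qed.

Lemma Ktrunk a : good a -> is_trunk E col (K a).
Proof.
move=> ga.
have tp : trunk_prop E col (K a).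
  apply/and4P; split.
  - apply/forallP=> p; apply/implyP; rewrite inE => /andP[h1 h2].
    apply/and4P; split => //; rewrite ?inE //.
      exact: connect_trans h2 (connect1 h1).
    by rewrite Esym h1 (connect_trans h2 (connect1 h1)).
  - by apply/set0Pn; exists a; rewrite inE connect0.
  - apply/forallP=> x; apply/implyP; rewrite inE => ax.
    apply/forallP=> y; apply/implyP; rewrite inE => ay.
    have : connect E x y by apply: connect_trans ay; rewrite csym.
    move=> /connectP[s pth ->]; apply/connectP; exists s => //.
    exact: lift_path ax pth.
  - apply/forallP=> v; apply/implyP; rewrite inE => av; apply/implyP => cv.
    rewrite degK //; have := deg_col cv.
    suff : 0 < deg E v by lia.
    case: (a =P v) => [av0|/eqP nav].
      by move: ga; rewrite /good av0 (negbTE cv).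
    have [u vu] := has_nb av nav.
    by rewrite /deg card_gt0; apply/set0Pn; exists u; rewrite inE.
rewrite /is_trunk tp /=; apply/forallP=> S'; apply/implyP => /and3P[tp' s1 s2].
have [sub' _ conn' _] := and4P tp'.
have aS' : a \in S'.1 by apply: (subsetP s1); rewrite inE connect0.
have s1' : S'.1 \subset (K a).1.
  apply/subsetP=> x xS; rewrite inE.
  move: conn'; rewrite /connectedS => /forallP/(_ a)/implyP/(_ aS') hh.
  move: hh => /forallP/(_ x)/implyP/(_ xS).
  move=> /connectP[s pth ->]; apply/connectP; exists s => //.
  apply: sub_path pth => u w /(sub_prop sub') /and4P[] //.
have s2' : S'.2 \subset (K a).2.
  apply/subsetP=> p pS; have /and4P[h1 h2 _ _] := sub_prop sub' pS.
  by rewrite inE h1 /=; have := subsetP s1' _ h2; rewrite inE.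
apply/eqP; rewrite [S']surjective_pairing; congr pair; apply/eqP; rewrite eqEsubset ?s1 ?s1' ?s2 ?s2' //.
Qed.

Hypothesis Hyp : forall R : subgraph (RV e c), is_trunk (Redge' e c) (Rcol e c) R ->
     ( #|[set v in R.1 | Rcol e c v != None]| = 1 /\
       (forall x y, (x, y) \in R.2 ->
          ~~ ((2 < deg (Redge' e c) x) && (2 < deg (Redge' e c) y))) )
     \/
     ( (forall v, v \in R.1 -> Rcol e c v = None) /\
       exists2 v, v \in R.1 &
         forall x y, (x, y) \in R.2 -> in_Ebb2S R x y -> (v == x) || (v == y) ).

Definition covers (S : subgraph T) v :=
  [forall x, forall y, ((x, y) \in S.2) ==> in_Ebb2S S x y ==> (v == x) || (v == y)].

Definition rootK (S : subgraph T) : option T :=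
  if [pick u in S.1 | col u != None] is Some u then Some u
  else [pick v in S.1 | covers S v].

Definition rt (a : T) := odflt a (rootK (K a)).

Definition RP a r := [/\ rootK (K a) = Some r, connect E a r,
   (forall y, connect E a y -> col y != None -> y = r) &
   (forall x y, E x y -> connect E a x -> 3 <= deg E x -> 3 <= deg E y -> r = x \/ r = y)].

Lemma root_i a : #|[set v in (K a).1 | col v != None]| = 1 ->
  (forall x y, (x, y) \in (K a).2 -> ~~ ((2 < deg E x) && (2 < deg E y))) ->
  exists r, RP a r.
Proof.
move=> c1 noE.
  have /cards1P[u hu] : #|[set v in (K a).1 | col v != None]| == 1 by rewrite c1.
  have uin : u \in [set v in (K a).1 | col v != None] by rewrite hu set11.
  have rK : rootK (K a) = Some u.
    rewrite /rootK; case: pickP => [u' hu'|none].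
      have : u' \in [set v in (K a).1 | col v != None] by rewrite inE.
      by rewrite hu inE => /eqP ->.
    by move: (none u); move: uin; rewrite inE => ->.
  exists u; split => //.
  - by move: uin; rewrite !inE => /andP[].
  - move=> y ay cy; have : y \in [set v in (K a).1 | col v != None] by rewrite !inE ay cy.
    by rewrite hu inE => /eqP.
  - move=> x y xy ax hx hy; have := noE x y; rewrite inE /= xy ax => /(_ isT).
    by rewrite hx hy.
Qed.


Lemma cov_use a r x y : covers (K a) r -> E x y -> connect E a x -> 3 <= deg E x -> 3 <= deg E y -> r = x \/ r = y.
Proof.
move=> rc xy ax hx hy.
  have ay : connect E a y by apply: connect_trans ax (connect1 xy).
  move: rc => /forallP/(_ x)/forallP/(_ y).
  have -> : (x, y) \in (K a).2 by rewrite inE /= xy ax.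
  have -> : in_Ebb2S (K a) x y by rewrite /in_Ebb2S !degK // hx hy.
  by move=> /orP[] /eqP ->; [left | right].
Qed.

Lemma covers_of a v : 
  (forall x y, (x, y) \in (K a).2 -> in_Ebb2S (K a) x y -> (v == x) || (v == y)) -> covers (K a) v.
Proof.
move=> vcov; apply/forallP=> x; apply/forallP=> y; apply/implyP=> h; apply/implyP; exact: vcov.
Qed.

Lemma rootK_ii a v : (forall v, v \in (K a).1 -> col v = None) -> v \in (K a).1 -> covers (K a) v ->
  exists r, rootK (K a) = Some r /\ r \in (K a).1 /\ covers (K a) r.
Proof.
move=> nocol vin cov.
  rewrite /rootK; case: pickP => [u /andP[uin cu]|_].
    by rewrite nocol in cu.
  case: pickP => [r /andP[rin rc]|none]; first by exists r.
  by move: (none v); rewrite vin cov.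
Qed.

Lemma root_ii a v : (forall v, v \in (K a).1 -> col v = None) -> v \in (K a).1 ->
  (forall x y, (x, y) \in (K a).2 -> in_Ebb2S (K a) x y -> (v == x) || (v == y)) ->
  exists r, RP a r.
Proof.
move=> nocol vin vcov.
case: (rootK_ii nocol vin (covers_of vcov)) => r [rK [rin rc]]; exists r; split => //.
- by move: rin; rewrite inE.
- move=> y ay cy; have yin : y \in (K a).1 by rewrite inE.
  by move: cy; rewrite (nocol y yin) eqxx.
- move=> x y xy ax hx hy; exact: cov_use rc xy ax hx hy.
Qed.

Lemma root_prop a : good a -> exists r, RP a r.
Proof.
move=> ga; case: (Hyp (Ktrunk ga)) => [[c1 noE]|[nocol [v vin vcov]]].
  exact: root_i c1 noE.
exact: root_ii nocol vin vcov.
Qed.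

Lemma rt_prop a : good a -> [/\ connect E a (rt a),
   (forall y, connect E a y -> col y != None -> y = rt a) &
   (forall x y, E x y -> connect E a x -> 3 <= deg E x -> 3 <= deg E y -> rt a = x \/ rt a = y)].
Proof. by move=> ga; case: (root_prop ga) => r [rK h1 h2 h3]; rewrite /rt rK. Qed.

Lemma good_nb a b : E a b -> good a.
Proof.
move=> ab; apply/orP; right; rewrite /deg card_gt0; apply/set0Pn; exists b; by rewrite inE.
Qed.

Lemma rt_same a b : good a -> connect E a b -> rt a = rt b.
Proof.
move=> ga ab; case: (root_prop ga) => r [rK _ _ _].
by rewrite /rt -(Ksame ab) rK.
Qed.

Lemma andb3C (a1 b1 c1 : bool) : [&& a1, b1 & c1] = [&& a1, c1 & b1].
Proof. by case: a1; case: b1; case: c1. Qed.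

Definition avoid (z : T) : rel T := fun u w => [&& E u w, u != z & w != z].

Lemma avoid_sym z : symmetric (avoid z).
Proof. move=> u w; rewrite /avoid (Esym u w); exact: andb3C. Qed.

Lemma path_avoid_notin z x s : path (avoid z) x s -> z \notin s.
Proof.
elim: s x => [//|y s IH] x /= /andP[/and3P[_ _ yz] p].
by rewrite inE negb_or eq_sym yz (IH y p).
Qed.

Lemma path_to_avoid z x s : z != x -> z \notin s -> path E x s -> path (avoid z) x s.
Proof.
elim: s x => [//|y s IH] x zx /=; rewrite inE negb_or => /andP[zy zs] /andP[xy p].
by rewrite /avoid xy eq_sym zx eq_sym zy /= IH.
Qed.

Lemma T1 y z1 z2 r : E y z1 -> E y z2 -> connect (avoid y) z1 r -> connect (avoid y) z2 r -> z1 = z2.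
Proof.
move=> yz1 yz2 c1 c2.
have : connect (avoid y) z1 z2.
  apply: connect_trans c1 _; by rewrite (sym_connect_sym (@avoid_sym y)).
case: (z1 =P z2) => // nz /connectP[s pth lst].
case: (shortenP pth) lst => p' pth' up _ lst.
have yp : y \notin p' := path_avoid_notin pth'.
have yz1' : y != z1 by apply/eqP=> h; rewrite h Eirr in yz1.
have u3 : uniq (y :: z1 :: p') by rewrite cons_uniq up andbT inE negb_or yz1' yp.
have pthE : path E z1 p' by apply: sub_path pth' => u w /and3P[h _ _]; exact h.
case: p' pth' up yp lst u3 pthE => [|t p'] pth' up yp lst u3 pthE.
  by exfalso; apply: nz; rewrite lst.
have := @Eforest (y :: z1 :: t :: p') u3 isT; move/negP => H; exfalso; apply: H.
change (path E y (rcons (z1 :: t :: p') y)).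
have hp : path E z1 (rcons (t :: p') y).
  by rewrite rcons_path pthE -lst (Esym z2 y) yz2.
rewrite rcons_cons; apply/andP; split => //.
Qed.

Lemma T2 y w r : y != w -> connect E y r -> connect (avoid w) y r \/ connect (avoid y) w r.
Proof.
move=> yw /connectP[s pth ->].
case: (shortenP pth) => p' pth' up _.
case wp: (w \in p'); last first.
  left; apply/connectP; exists p'; last by [].
  apply: path_to_avoid pth'; [by rewrite eq_sym | by rewrite wp].
right; case/splitPr: wp pth' up => p1 p2 pth' up.
rewrite cat_path in pth'; case/andP: pth' => _ /andP[_ p2p].
have yn : y \notin w :: p2.
  by move: up; rewrite cons_uniq mem_cat negb_or => /andP[/andP[_ ->]].
apply/connectP; exists p2; last by rewrite last_cat.
move: yn; rewrite inE negb_or => /andP[yw' yp2].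
exact: path_to_avoid yw' yp2 p2p.
Qed.

Lemma avoid_nreach v z : connect (avoid v) z v -> z = v.
Proof.
move=> /connectP[s pth lst]; case/lastP: s pth lst => [|s t] pth lst.
  by rewrite lst.
rewrite last_rcons in lst; subst t.
move: pth; rewrite rcons_path => /andP[_ /and3P[_ _]].
by rewrite eqxx.
Qed.

Definition fR (y : T) : option T :=
  if [pick z | E y z && connect (avoid y) z (rt z)] is Some z then
    (if 3 <= deg E z then Some z else None) else None.

Definition Cset := [set v | (3 <= deg E v) && (rt v == v)].

Lemma S0' v : v \in Cset -> 3 <= deg E v.
Proof. by rewrite inE => /andP[]. Qed.

Lemma good_high v : 3 <= deg E v -> good v.
Proof. by move=> h; rewrite /good; apply/orP; right; lia. Qed.

Lemma S1' v y : v \in Cset -> E v y -> fR y = Some v.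
Proof.
rewrite inE => /andP[hv /eqP rv] vy; rewrite /fR.
case: pickP => [z /andP[yz cz]|none]; last first.
  by move: (none v); rewrite Esym vy rv connect0.
have rz : rt z = rt v.
  apply/esym/rt_same; first exact: good_high.
  apply: connect_trans (connect1 vy) (connect1 yz).
rewrite rz rv in cz.
have -> : z = v by apply: T1 yz _ cz (connect0 _ _); rewrite Esym.
by rewrite hv.
Qed.

Lemma S2' v : v \in Cset -> fR v = None.
Proof.
rewrite inE => /andP[hv /eqP rv]; rewrite /fR.
case: pickP => [z /andP[vz cz]|//].
have rz : rt z = v by rewrite -(rt_same (good_high hv) (connect1 vz)).
rewrite rz in cz; have := avoid_nreach cz => zv; by rewrite zv Eirr in vz.
Qed.

Lemma S3' a b : E a b -> 3 <= deg E a -> 3 <= deg E b -> (a \in Cset) || (b \in Cset).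
Proof.
move=> ab ha hb; case: (rt_prop (good_high ha)) => _ _ /(_ a b ab (connect0 _ _) ha hb).
case=> h; first by rewrite inE ha h eqxx.
by apply/orP; right; rewrite inE hb -(rt_same (good_high ha) (connect1 ab)) h eqxx.
Qed.

Lemma S5' a b : a \in Cset -> b \in Cset -> ~~ E a b.
Proof.
rewrite !inE => /andP[ha /eqP ra] /andP[hb /eqP rb]; apply/negP=> ab.
have := rt_same (good_high ha) (connect1 ab); rewrite ra rb => h.
by rewrite h Eirr in ab.
Qed.

Lemma S6' y w : fR y = Some w -> 3 <= deg E w.
Proof. rewrite /fR; case: pickP => [z _|//]; by case: ifP => // h [<-]. Qed.

Lemma bound w : 3 <= deg E w ->
  #|[set y | E w y && ((col y != None) || (fR y != Some w))]| <= 1.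
Proof.
move=> hw; have gw := good_high hw.
case: (rt_prop gw) => cr colr _.
apply: (@leq_trans #|[set y | E w y && connect (avoid w) y (rt w)]|).
  apply: subset_leq_card; apply/subsetP=> y; rewrite !inE => /andP[wy].
  rewrite wy /= => /orP[cy|fy].
    by rewrite -(colr y (connect1 wy) cy) connect0.
  apply/negPn/negP=> ncon.
  have yw : y != w by apply/eqP=> h; rewrite h Eirr in wy.
  have cyr : connect E y (rt w).
    apply: connect_trans cr; by rewrite csym connect1.
  case: (T2 yw cyr) => [h|h]; first by rewrite h in ncon.
  move: fy; rewrite /fR; case: pickP => [z /andP[yz cz]|none]; last first.
    by move: (none w); rewrite Esym wy h.
  have rz : rt z = rt w.
    apply/esym/rt_same => //; apply: connect_trans (connect1 wy) (connect1 yz).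
  rewrite rz in cz.
  have -> : z = w by apply: T1 yz _ cz h; rewrite Esym.
  by rewrite hw eqxx.
apply/card_le1_eqP => y1 y2; rewrite !inE => /andP[w1 c1] /andP[w2 c2].
by [apply: T1 w1 w2 c1 c2 | apply/esym; apply: T1 w1 w2 c1 c2].
Qed.

Lemma init_inv : Inv E Cset fR col.
Proof.
split.
  move=> v vC cv y vy.
  case cy: (col y) => [k|]; last by [].
  case: (rt_prop (good_high (S0' vC))) => _ colr _.
  have := colr y (connect1 vy); rewrite cy => /(_ isT) yv.
  move: vC; rewrite inE => /andP[_ /eqP rv].
  by move: cv; rewrite -rv -yv cy.
move=> w hw _ _.
exact: leq_trans (bad_le E fR col w) (bound hw).
Qed.

Lemma final : alice_wins_B E col.
Proof. exact: (game Esym S0' S1' S2' S3' S5' S6' init_inv). Qed.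
End Red.

Unset Implicit Arguments.
Set Strict Implicit.

Theorem lemma6p2 (V : finType) (e : rel V) (c : V -> option 'I_3) :
  simple_graph e -> forest e -> proper_partial_coloring e c ->
  (forall R : subgraph (RV e c), is_trunk (Redge' e c) (Rcol e c) R ->
     ( #|[set v in R.1 | Rcol e c v != None]| = 1 /\
       (forall x y, (x, y) \in R.2 ->
          ~~ ((2 < deg (Redge' e c) x) && (2 < deg (Redge' e c) y))) )
     \/
     ( (forall v, v \in R.1 -> Rcol e c v = None) /\
       exists2 v, v \in R.1 &
         forall x y, (x, y) \in R.2 -> in_Ebb2S R x y -> (v == x) || (v == y) )) ->
  alice_wins_RCG (Redge' e c) (Rcol e c).
Proof.
move=> es ef _ H; rewrite /alice_wins_RCG; exact: (final es ef H).
Qed.
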